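(* Let $p=(p_i)_{i\in\mathbb{N}}$ be a cookie environment with $p_i\in[\frac12,1)$ for all $i$, and suppose $\delta=\sum_{i=1}^\infty(2p_i-1)<\infty$. Let $\rho(x)=\mathbb{E}[U_p(x)]-x$, $\nu(x)=\frac1x\mathbb{E}[(U_p(x)-x)^2]$ and $\theta(x)=\frac{2\rho(x)}{\nu(x)}$. Then: \begin{enumerate} \item $\mu=\lim_{x\to\infty}\frac{\mathbb{E}[U_p(x)]}{x}=1$; \item $\lim_{x\to\infty}\theta(x)=\delta$; \item there is a constant $C$ depending only on $p$ such that $\theta(x)\le\delta+C\log^4(x)/\sqrt x$ for all sufficiently large $x$. \end{enumerate}
   Context: For a cookie environment $p$, let $B_1,B_2,\dots$ be independent Bernoulli random variables with $\Pr[B_i=1]=p_i$ ($B_i=1$ is a ''success'', $B_i=0$ a ''failure''). For a positive integer $x$, $U_p(x)=\inf\{k\in\mathbb{N}:\sum_{i=1}^k(1-B_i)=x\}-x$, i.e. the number of successes before the $x$-th failure. *)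

(* Defs.v *)
From Stdlib Require Import Reals List.
From Coquelicot Require Import Coquelicot.
Import ListNotations.
Open Scope R_scope.

(* A cookie environment p : nat -> R; trial B_j (j = 1, 2, ...) is a success
   (true) with probability p j and a failure (false) with probability 1 - p j. *)
Definition bern (p : nat -> R) (j : nat) (b : bool) : R :=
  if b then p j else 1 - p j.

Fixpoint pattern_prob (p : nat -> R) (j : nat) (s : list bool) : R :=
  match s with
  | [] => 1
  | b :: s' => bern p j b * pattern_prob p (S j) s'
  end.

Fixpoint bool_seqs (n : nat) : list (list bool) :=
  match n with
  | O => [[]]
  | S n' => flat_map (fun s => [true :: s; false :: s]) (bool_seqs n')
  end.

Definition count_failures (s : list bool) : nat :=
  length (filter negb s).

(* The event {U_p(x) = k}: the (k+x)-th trial is the x-th failure, i.e. among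
   B_1..B_{k+x} there are exactly x failures and B_{k+x} is a failure. *)
Definition U_event (x k : nat) (s : list bool) : bool :=
  Nat.eqb (length s) (k + x) && Nat.eqb (count_failures s) x
  && negb (last s true).

Definition U_pmf (p : nat -> R) (x k : nat) : R :=
  fold_right Rplus 0
    (map (pattern_prob p 1%nat) (filter (U_event x k) (bool_seqs (k + x)))).

Definition EU (p : nat -> R) (x : nat) : R :=
  Series (fun k => INR k * U_pmf p x k).

Definition EU2 (p : nat -> R) (x : nat) : R :=
  Series (fun k => (INR k - INR x) ^ 2 * U_pmf p x k).

Definition rho (p : nat -> R) (x : nat) : R := EU p x - INR x.
Definition nu (p : nat -> R) (x : nat) : R := EU2 p x / INR x.
Definition theta (p : nat -> R) (x : nat) : R := 2 * rho p x / nu p x.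

(* Main.v *)
Require Import Defs.
From Stdlib Require Import Reals Lra Lia List.
From Coquelicot Require Import Coquelicot.
Import ListNotations.
Open Scope R_scope.

Fixpoint Hf (p : nat -> R) (r : nat) : nat -> nat -> R :=
  match r with
  | O => fun j k => match k with O => 1 | S _ => 0 end
  | S r' => fix G (j k : nat) {struct k} : R :=
      match k with
      | O => (1 - p j) * Hf p r' (S j) O
      | S k' => p j * G (S j) k' + (1 - p j) * Hf p r' (S j) (S k')
      end
  end.

Lemma Hf_S0 p r j : Hf p (S r) j 0 = (1 - p j) * Hf p r (S j) 0.
Proof. reflexivity. Qed.
Lemma Hf_SS p r j k : Hf p (S r) j (S k) = p j * Hf p (S r) (S j) k + (1 - p j) * Hf p r (S j) (S k).
Proof. reflexivity. Qed.

Definition sumL (l : list (list bool)) (F : list bool -> R) : R :=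
  fold_right Rplus 0 (map F l).

Lemma sumL_filter (l : list (list bool)) P g :
  fold_right Rplus 0 (map g (filter P l)) = sumL l (fun s => if P s then g s else 0).
Proof.
  unfold sumL; induction l as [|a l IH]; simpl; auto.
  destruct (P a); simpl; rewrite IH; lra.
Qed.

Lemma sumL_flat (l : list (list bool)) F :
  sumL (flat_map (fun s => [true :: s; false :: s]) l) F
  = sumL l (fun s => F (true :: s) + F (false :: s)).
Proof.
  unfold sumL; induction l as [|a l IH]; simpl; auto.
  rewrite IH; lra.
Qed.

Lemma sumL_ext (l : list (list bool)) F G :
  (forall s, In s l -> F s = G s) -> sumL l F = sumL l G.
Proof.
  unfold sumL; intros H; f_equal; apply map_ext_in; auto.
Qed.

Lemma sumL_plus l F G : sumL l (fun s => F s + G s) = sumL l F + sumL l G.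
Proof. unfold sumL; induction l; simpl; [lra|rewrite IHl; lra]. Qed.

Lemma sumL_scal l c F : sumL l (fun s => c * F s) = c * sumL l F.
Proof. unfold sumL; induction l; simpl; [lra|rewrite IHl; lra]. Qed.

Lemma sumL_zero l : sumL l (fun _ => 0) = 0.
Proof. unfold sumL; induction l; simpl; [lra|rewrite IHl; lra]. Qed.

Lemma bool_seqs_len n s : In s (bool_seqs n) -> length s = n.
Proof.
  revert s; induction n; simpl; intros s Hs.
  - destruct Hs as [<-|[]]; reflexivity.
  - apply in_flat_map in Hs as [s' [Hs' Hin]].
    simpl in Hin; destruct Hin as [<-|[<-|[]]]; simpl; f_equal; auto.
Qed.

Lemma last_true_cons s : last (true :: s) true = last s true.
Proof. destruct s; reflexivity. Qed.

Lemma count0_last s : count_failures s = 0%nat -> last s true = true.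
Proof.
  induction s as [|b s IH]; simpl; auto.
  destruct b; simpl; unfold count_failures; simpl; intros H; [|discriminate].
  destruct s; [reflexivity| apply IH; exact H].
Qed.

Definition LP p j r k :=
  sumL (bool_seqs (k + r)) (fun s => if U_event r k s then pattern_prob p j s else 0).

Lemma LP_eq p : forall n j r k, (k + r)%nat = n -> (1 <= r)%nat -> LP p j r k = Hf p r j k.
Proof.
  induction n as [|n IH]; intros j r k Hn Hr; [lia|].
  unfold LP; rewrite Hn; simpl bool_seqs; rewrite sumL_flat.
  destruct r as [|r]; [lia|].
  assert (Htrue : forall s, In s (bool_seqs n) ->
     (if U_event (S r) k (true :: s) then pattern_prob p j (true :: s) else 0)
     = match k with O => 0 | S k' => p j * (if U_event (S r) k' s then pattern_prob p (S j) s else 0) end).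
  { intros s Hs; apply bool_seqs_len in Hs.
    unfold U_event; simpl length; rewrite last_true_cons.
    unfold count_failures; simpl filter.
    destruct k as [|k'].
    - replace (Nat.eqb (length (filter negb s)) (S r)) with false.
      2:{ symmetry; apply Nat.eqb_neq; pose proof (filter_length_le negb s); lia. }
      rewrite Bool.andb_false_r; reflexivity.
    - replace (Nat.eqb (S (length s)) (S k' + S r)) with true.
      2:{ symmetry; apply Nat.eqb_eq; lia. }
      replace (Nat.eqb (length s) (k' + S r)) with true.
      2:{ symmetry; apply Nat.eqb_eq; lia. }
      simpl andb. destruct (_ && _)%bool; simpl; lra. }
  assert (Hfalse : forall s, In s (bool_seqs n) ->
     (if U_event (S r) k (false :: s) then pattern_prob p j (false :: s) else 0)
     = (1 - p j) * (match r with
                    | O => match k with O => 1 | S _ => 0 end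
                    | S _ => if U_event r k s then pattern_prob p (S j) s else 0 end)).
  { intros s Hs; apply bool_seqs_len in Hs.
    unfold U_event; simpl length.
    replace (Nat.eqb (S (length s)) (k + S r)) with true.
    2:{ symmetry; apply Nat.eqb_eq; lia. }
    unfold count_failures; simpl filter; simpl length.
    destruct r as [|r].
    - destruct k as [|k].
      + destruct s; [|simpl in Hs; lia]. simpl. unfold bern. lra.
      + destruct (Nat.eqb (S (length (filter negb s))) 1) eqn:E.
        * apply Nat.eqb_eq in E. injection E as E.
          pose proof (count0_last s E) as HL.
          replace (last (false :: s) true) with true.
          2:{ destruct s; [simpl in Hs; lia|]. simpl in HL |- *. symmetry; exact HL. }
          simpl. lra.
        * simpl. lra.
    - destruct s as [|b s]; [simpl in Hs; lia|].
      change (last (false :: b :: s) true) with (last (b :: s) true).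
      replace (Nat.eqb (length (b :: s)) (k + S r)) with true.
      2:{ symmetry; apply Nat.eqb_eq; simpl in *; lia. }
      change (Nat.eqb (S (length (filter negb (b :: s)))) (S (S r))) with
        (Nat.eqb (length (filter negb (b :: s))) (S r)).
      simpl andb. destruct (_ && _)%bool; simpl; unfold bern; lra. }
  rewrite (sumL_ext _ _ _ (fun s Hs => f_equal2 Rplus (Htrue s Hs) (Hfalse s Hs))).
  rewrite sumL_plus, sumL_scal.
  destruct k as [|k].
  - rewrite sumL_zero, Hf_S0. destruct r as [|r].
    + assert (n = 0%nat) by (simpl in Hn; lia). subst n. simpl. unfold sumL. simpl. lra.
    + rewrite <- (IH (S j) (S r) 0%nat); [|lia|lia]. unfold LP. simpl plus.
      replace (0 + S r)%nat with n by lia. lra.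
  - rewrite sumL_scal, Hf_SS.
    rewrite <- (IH (S j) (S r) k); [|lia|lia].
    destruct r as [|r].
    + rewrite sumL_zero. simpl. unfold LP. replace n with (k + 1)%nat by lia. lra.
    + rewrite <- (IH (S j) (S r) (S k)); [|lia|lia]. unfold LP.
      replace n with (k + S (S r))%nat by lia.
      replace (S k + S r)%nat with (k + S (S r))%nat by lia. lra.
Qed.

Lemma U_pmf_Hf p x k : (1 <= x)%nat -> U_pmf p x k = Hf p x 1 k.
Proof.
  intros Hx. rewrite <- (LP_eq p (k + x) 1 x k eq_refl Hx).
  unfold U_pmf, LP. apply sumL_filter.
Qed.


Fixpoint sumk (f : nat -> R) (N : nat) : R :=
  match N with O => 0 | S n => sumk f n + f n end.

Lemma sumk_ext f g N : (forall k, (k < N)%nat -> f k = g k) -> sumk f N = sumk g N.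
Proof. induction N; simpl; intros H; auto. rewrite IHN by (intros; apply H; lia). rewrite H by lia; auto. Qed.
Lemma sumk_plus f g N : sumk (fun k => f k + g k) N = sumk f N + sumk g N.
Proof. induction N; simpl; lra. Qed.
Lemma sumk_scal c f N : sumk (fun k => c * f k) N = c * sumk f N.
Proof. induction N; simpl; [lra|rewrite IHN; lra]. Qed.
Lemma sumk_le f g N : (forall k, f k <= g k) -> sumk f N <= sumk g N.
Proof. induction N; simpl; intros H; [lra|]. specialize (IHN H); specialize (H N); lra. Qed.
Lemma sumk_nonneg f N : (forall k, 0 <= f k) -> 0 <= sumk f N.
Proof. induction N; simpl; intros H; [lra|]. specialize (IHN H); specialize (H N); lra. Qed.
Lemma sumk_mono f N M : (forall k, 0 <= f k) -> (N <= M)%nat -> sumk f N <= sumk f M.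
Proof. intros H HNM; induction HNM; simpl; [lra|]. specialize (H m); lra. Qed.

Definition env (p : nat -> R) := forall i, 1/2 <= p i < 1.

Lemma Hf_nonneg p r : env p -> forall j k, 0 <= Hf p r j k.
Proof.
  intros Hp; induction r as [|r IH]; intros j k.
  - destruct k; simpl; lra.
  - revert j; induction k as [|k IHk]; intros j.
    + rewrite Hf_S0. specialize (Hp j). specialize (IH (S j) 0%nat). nra.
    + rewrite Hf_SS. specialize (IHk (S j)). specialize (IH (S j) (S k)). specialize (Hp j). nra.
Qed.

Definition SW p (f : nat -> R) N j r := sumk (fun k => f k * Hf p r j k) N.

Lemma SW_rec p f N j r :
  SW p f (S N) j (S r) = p j * SW p (fun k => f (S k)) N (S j) (S r) + (1 - p j) * SW p f (S N) (S j) r.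
Proof.
  unfold SW; revert j; induction N as [|N IH]; intros j.
  - cbn [sumk]. rewrite Hf_S0. lra.
  - change (sumk (fun k => f k * Hf p (S r) j k) (S (S N)))
      with (sumk (fun k => f k * Hf p (S r) j k) (S N) + f (S N) * Hf p (S r) j (S N)).
    rewrite IH. rewrite Hf_SS. cbn [sumk]. lra.
Qed.

Lemma SW_0 p f N j : SW p f (S N) j 0 = f 0%nat.
Proof.
  unfold SW; induction N; simpl in *. lra. rewrite IHN. lra.
Qed.

Lemma SW_plus p f g N j r : SW p (fun k => f k + g k) N j r = SW p f N j r + SW p g N j r.
Proof. unfold SW. rewrite <- sumk_plus. apply sumk_ext; intros; lra. Qed.
Lemma SW_scal p c f N j r : SW p (fun k => c * f k) N j r = c * SW p f N j r.
Proof. unfold SW. rewrite <- sumk_scal. apply sumk_ext; intros; lra. Qed.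

Definition SS p N j r := SW p (fun _ => 1) N j r.

Lemma SS_bounds p : env p -> forall N j r, 0 <= SS p N j r <= 1.
Proof.
  intros Hp N; induction N as [|N IH]; intros j r.
  - unfold SS, SW; simpl; lra.
  - split. { unfold SS, SW. apply sumk_nonneg. intros k. pose proof (Hf_nonneg p r Hp j k). lra. }
    induction r as [|r IHr] in j |- *.
    + unfold SS; rewrite SW_0; lra.
    + unfold SS in *; rewrite SW_rec. specialize (IH (S j) (S r)). specialize (IHr (S j)).
      specialize (Hp j). nra.
Qed.

Definition tails (p : nat -> R) (t : nat -> R) (T0 : R) :=
  (forall j, t (S j) = t j - (2 * p j - 1)) /\ (forall j, 0 <= t j <= T0).

Lemma F1_bound p t T0 : env p -> tails p t T0 -> forall N j r,
  SW p INR N j r + INR N * (1 - SS p N j r) <= INR r + t j.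
Proof.
  intros Hp [Ht HT] N; induction N as [|N IH]; intros j r.
  - unfold SS, SW; simpl. pose proof (HT j). pose proof (pos_INR r). lra.
  - induction r as [|r IHr] in j |- *.
    + unfold SS; rewrite !SW_0. simpl. pose proof (HT j). lra.
    + unfold SS; rewrite !SW_rec.
      assert (E : SW p (fun k => INR (S k)) N (S j) (S r) = SW p INR N (S j) (S r) + SS p N (S j) (S r)).
      { unfold SS; rewrite <- SW_plus. unfold SW; apply sumk_ext; intros; rewrite S_INR; lra. }
      rewrite E. fold (SS p N (S j) (S r)). fold (SS p (S N) (S j) r).
      specialize (IH (S j) (S r)). specialize (IHr (S j)).
      pose proof (SS_bounds p Hp N (S j) (S r)). pose proof (SS_bounds p Hp (S N) (S j) r).
      rewrite Ht in IH, IHr. rewrite !S_INR in *. specialize (Hp j).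
      nra.
Qed.

Lemma M1_bound p t T0 : env p -> tails p t T0 -> forall N j r,
  SW p INR N j r <= INR r + T0.
Proof.
  intros Hp Htl N j r. pose proof (F1_bound p t T0 Hp Htl N j r).
  pose proof (SS_bounds p Hp N j r). pose proof (pos_INR N). destruct Htl as [_ HT].
  specialize (HT j). nra.
Qed.

Lemma M2_bound p t T0 c : env p -> tails p t T0 -> 0 < c -> (forall i, c <= 1 - p i) ->
  forall N j r, SW p (fun k => INR k ^ 2) N j r <= (3 + 2 * T0) / c * (INR r ^ 2 + INR r).
Proof.
  intros Hp Htl Hc Hq.
  assert (HT0 : 0 <= T0) by (destruct Htl as [_ HT]; specialize (HT 0%nat); lra).
  set (K := (3 + 2 * T0) / c).
  assert (HK : K * c = 3 + 2 * T0) by (unfold K; field; lra).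
  assert (HK0 : 0 <= K) by (unfold K; apply Rmult_le_pos; [lra| left; apply Rinv_0_lt_compat; lra]).
  intros N; induction N as [|N IH]; intros j r.
  - unfold SW; simpl. pose proof (pos_INR r). nra.
  - induction r as [|r IHr] in j |- *.
    + rewrite SW_0. simpl. lra.
    + rewrite SW_rec.
      assert (E : SW p (fun k => INR (S k) ^ 2) N (S j) (S r) =
         SW p (fun k => INR k ^ 2) N (S j) (S r) + 2 * SW p INR N (S j) (S r) + SS p N (S j) (S r)).
      { unfold SS; rewrite <- SW_scal, <- !SW_plus. unfold SW; apply sumk_ext; intros; rewrite S_INR; lra. }
      rewrite E.
      specialize (IH (S j) (S r)). specialize (IHr (S j)).
      pose proof (M1_bound p t T0 Hp Htl N (S j) (S r)).
      pose proof (SS_bounds p Hp N (S j) (S r)).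
      pose proof (Hf_nonneg p r Hp).
      assert (0 <= SW p (fun k => INR k ^ 2) (S N) (S j) r).
      { unfold SW; apply sumk_nonneg; intros k. pose proof (Hf_nonneg p r Hp (S j) k). pose proof (pos_INR k). nra. }
      rewrite !S_INR in *. specialize (Hp j). specialize (Hq j). pose proof (pos_INR r).
      set (A := SW p (fun k => INR k ^ 2) N (S j) (S r)) in *.
      set (B := SW p (fun k => INR k ^ 2) (S N) (S j) r) in *.
      set (M := SW p INR N (S j) (S r)) in *.
      set (S0 := SS p N (S j) (S r)) in *.
      set (x := INR r) in *.
      assert (Hstep : p j * (2 * (x + 1 + T0) + 1) <= (1 - p j) * (K * (2 * x + 2))).
      { assert ((1 - p j) * K >= c * K) by nra. nra. }
      nra.
Qed.


Definition Ctx p t T0 c := env p /\ tails p t T0 /\ 0 < c /\ (forall i, c <= 1 - p i).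

Definition Bnd T0 c (r : nat) := 1 + (3 + 2 * T0) / c * (INR r ^ 2 + INR r).

Lemma sum_n_sumk (a : nat -> R) n : sum_n a n = sumk a (S n).
Proof.
  induction n; simpl. rewrite sum_O; simpl; lra.
  rewrite sum_Sn, IHn. simpl. reflexivity.
Qed.

Definition Dom (f : nat -> R) := exists C, forall k, Rabs (f k) <= C * (1 + INR k ^ 2).

Lemma base_ex p t T0 c j r : Ctx p t T0 c ->
  ex_series (fun k => (1 + INR k ^ 2) * Hf p r j k) /\
  Series (fun k => (1 + INR k ^ 2) * Hf p r j k) <= Bnd T0 c r.
Proof.
  intros [Hp [Htl [Hc Hq]]].
  assert (Hb : forall n, sum_n (fun k => (1 + INR k ^ 2) * Hf p r j k) n <= Bnd T0 c r).
  { intros n. rewrite sum_n_sumk.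
    change (SW p (fun k => 1 + INR k ^ 2) (S n) j r <= Bnd T0 c r).
    rewrite SW_plus. fold (SS p (S n) j r). unfold Bnd.
    pose proof (SS_bounds p Hp (S n) j r). pose proof (M2_bound p t T0 c Hp Htl Hc Hq (S n) j r). lra. }
  assert (Hinc : forall n, sum_n (fun k => (1 + INR k ^ 2) * Hf p r j k) n <=
                         sum_n (fun k => (1 + INR k ^ 2) * Hf p r j k) (S n)).
  { intros n. rewrite sum_Sn. pose proof (Hf_nonneg p r Hp j (S n)). pose proof (pos_INR (S n)).
    change (plus ?a ?b) with (a + b). nra. }
  destruct (ex_finite_lim_seq_incr _ _ Hinc Hb) as [l Hl].
  split. exists l; exact Hl.
  rewrite (is_series_unique _ l Hl).
  assert (H := is_lim_seq_le _ _ _ _ Hb Hl (is_lim_seq_const (Bnd T0 c r))). simpl in H. exact H.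
Qed.

Lemma Ex_bound p t T0 c j r f C : Ctx p t T0 c ->
  (forall k, Rabs (f k) <= C * (1 + INR k ^ 2)) ->
  ex_series (fun k => f k * Hf p r j k) /\
  Rabs (Series (fun k => f k * Hf p r j k)) <= C * Bnd T0 c r.
Proof.
  intros Hctx Hfb.
  destruct (base_ex p t T0 c j r Hctx) as [Hex Hle].
  destruct Hctx as [Hp _].
  assert (Hab : forall k, Rabs (f k * Hf p r j k) <= C * ((1 + INR k ^ 2) * Hf p r j k)).
  { intros k. rewrite Rabs_mult. rewrite (Rabs_right (Hf p r j k)) by (apply Rle_ge, Hf_nonneg; auto).
    pose proof (Hf_nonneg p r Hp j k). specialize (Hfb k). nra. }
  assert (Hexb : ex_series (fun k => C * ((1 + INR k ^ 2) * Hf p r j k))).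
  { apply (ex_series_scal_l C) in Hex. exact Hex. }
  assert (Hexa : ex_series (fun k => Rabs (f k * Hf p r j k))).
  { apply (ex_series_le (fun k => Rabs (f k * Hf p r j k)) (fun k => C * ((1 + INR k ^ 2) * Hf p r j k))); [|exact Hexb].
    intros k. change (norm (Rabs (f k * Hf p r j k))) with (Rabs (Rabs (f k * Hf p r j k))).
    rewrite Rabs_Rabsolu. apply Hab. }
  split. apply ex_series_Rabs; exact Hexa.
  eapply Rle_trans. apply Series_Rabs; exact Hexa.
  eapply Rle_trans. apply Series_le; [|exact Hexb]. intros k; split; [apply Rabs_pos| apply Hab].
  rewrite Series_scal_l.
  assert (0 <= C). { specialize (Hfb 0%nat). pose proof (Rabs_pos (f 0%nat)). simpl in Hfb. lra. }
  apply Rmult_le_compat_l; auto.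
Qed.

Definition Ex p j r f := Series (fun k => f k * Hf p r j k).

Lemma Dom_ex p t T0 c j r f : Ctx p t T0 c -> Dom f -> ex_series (fun k => f k * Hf p r j k).
Proof. intros H [C HC]. apply (Ex_bound p t T0 c j r f C H HC). Qed.

Lemma lim_series (a : nat -> R) (l : R) : is_lim_seq (sum_n a) l -> is_series a l.
Proof. intros H; exact H. Qed.

Lemma series_lim (a : nat -> R) (l : R) : is_series a l -> is_lim_seq (sum_n a) l.
Proof. intros H; exact H. Qed.

Lemma Ex_0 p j f : Ex p j 0 f = f 0%nat.
Proof.
  unfold Ex. apply is_series_unique. apply lim_series.
  apply (is_lim_seq_ext (fun _ => f 0%nat)). 2: apply is_lim_seq_const.
  intros n. rewrite sum_n_sumk. symmetry. apply (SW_0 p f n j).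
Qed.

Lemma Dom_shift f : Dom f -> Dom (fun k => f (S k)).
Proof.
  intros [C HC]. exists (3 * C). intros k. specialize (HC (S k)). rewrite S_INR in HC.
  pose proof (pos_INR k). assert (0 <= C) by (pose proof (Rabs_pos (f (S k))); nra).
  assert (1 + (INR k + 1)^2 <= 3 * (1 + INR k ^ 2)) by nra.
  eapply Rle_trans; [exact HC|]. replace (3 * C * (1 + INR k ^ 2)) with (C * (3 * (1 + INR k ^ 2))) by ring.
  apply Rmult_le_compat_l; lra.
Qed.

Lemma Ex_rec p t T0 c j r f : Ctx p t T0 c -> Dom f ->
  Ex p j (S r) f = p j * Ex p (S j) (S r) (fun k => f (S k)) + (1 - p j) * Ex p (S j) r f.
Proof.
  intros Hctx Hd. unfold Ex.
  pose proof (Dom_ex p t T0 c (S j) (S r) _ Hctx (Dom_shift f Hd)) as E1.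
  pose proof (Dom_ex p t T0 c (S j) r _ Hctx Hd) as E2.
  apply Series_correct, series_lim in E1. apply Series_correct, series_lim in E2.
  apply is_series_unique.
  change (is_lim_seq (sum_n (fun k => f k * Hf p (S r) j k))
    (p j * Series (fun k => f (S k) * Hf p (S r) (S j) k) + (1 - p j) * Series (fun k => f k * Hf p r (S j) k))).
  apply is_lim_seq_incr_1.
  apply (is_lim_seq_ext (fun n => p j * sum_n (fun k => f (S k) * Hf p (S r) (S j) k) n
                                 + (1 - p j) * sum_n (fun k => f k * Hf p r (S j) k) (S n))).
  { intros n. rewrite !sum_n_sumk. symmetry. apply (SW_rec p f (S n) j r). }
  apply is_lim_seq_plus'.
  - apply (is_lim_seq_scal_l _ (p j)) in E1. exact E1.
  - apply (is_lim_seq_scal_l _ (1 - p j) (Series (fun k => f k * Hf p r (S j) k))).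
    change (is_lim_seq (fun n => sum_n (fun k => f k * Hf p r (S j) k) (S n))
              (Series (fun k => f k * Hf p r (S j) k))).
    apply is_lim_seq_incr_1 with (u := sum_n (fun k => f k * Hf p r (S j) k)). exact E2.
Qed.

Lemma Ex_plus p t T0 c j r f g : Ctx p t T0 c -> Dom f -> Dom g ->
  Ex p j r (fun k => f k + g k) = Ex p j r f + Ex p j r g.
Proof.
  intros H Hf Hg. unfold Ex. rewrite <- Series_plus by (eapply Dom_ex; eauto).
  apply Series_ext; intros; lra.
Qed.

Lemma Ex_scal p j r a f : Ex p j r (fun k => a * f k) = a * Ex p j r f.
Proof.
  unfold Ex. rewrite <- Series_scal_l. apply Series_ext; intros; lra.
Qed.

Lemma Dom_plus f g : Dom f -> Dom g -> Dom (fun k => f k + g k).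
Proof.
  intros [C1 H1] [C2 H2]. exists (C1 + C2). intros k.
  specialize (H1 k); specialize (H2 k). eapply Rle_trans; [apply Rabs_triang|]. lra.
Qed.
Lemma Dom_scal a f : Dom f -> Dom (fun k => a * f k).
Proof.
  intros [C1 H1]. exists (Rabs a * C1). intros k. rewrite Rabs_mult.
  specialize (H1 k). pose proof (Rabs_pos a). rewrite Rmult_assoc. apply Rmult_le_compat_l; auto.
Qed.
Lemma Dom_minus f g : Dom f -> Dom g -> Dom (fun k => f k - g k).
Proof.
  intros Hf Hg. destruct (Dom_plus f (fun k => -1 * g k) Hf (Dom_scal (-1) g Hg)) as [C HC].
  exists C. intros k. specialize (HC k). replace (f k - g k) with (f k + -1 * g k) by lra. exact HC.
Qed.

Lemma Series0 : Series (fun _ => 0) = 0.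
Proof.
  apply is_series_unique, lim_series. apply (is_lim_seq_ext (fun _ => 0)); [|apply is_lim_seq_const].
  intros n; rewrite sum_n_sumk. induction n; simpl in *; lra.
Qed.

Lemma Ex_le p t T0 c j r f g : Ctx p t T0 c -> Dom f -> Dom g -> (forall k, f k <= g k) ->
  Ex p j r f <= Ex p j r g.
Proof.
  intros H Hf Hg Hfg.
  assert (E : Ex p j r g = Ex p j r f + Ex p j r (fun k => g k - f k)).
  { rewrite <- Ex_plus with (t := t) (T0 := T0) (c := c); auto.
    - unfold Ex; apply Series_ext; intros; lra.
    - apply Dom_minus; auto. }
  assert (0 <= Ex p j r (fun k => g k - f k)).
  { unfold Ex. pose proof (Dom_ex p t T0 c j r _ H (Dom_minus g f Hg Hf)) as Hex.
    destruct H as [Hp _].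
    apply Rle_trans with (Series (fun _ => 0)).
    - rewrite Series0; lra.
    - apply Series_le; auto. intros k; split; [lra|]. pose proof (Hf_nonneg p r Hp j k). specialize (Hfg k). nra. }
  lra.
Qed.


Lemma SS_rec p N j r : SS p (S N) j (S r) = p j * SS p N (S j) (S r) + (1 - p j) * SS p (S N) (S j) r.
Proof. unfold SS. apply SW_rec. Qed.

Lemma MP p t T0 c (Z : nat -> nat -> R) (K : nat -> R) : Ctx p t T0 c ->
  (forall j r, Z j r <= K r) -> (forall j, Z j 0%nat <= 0) ->
  (forall j r, Z j (S r) <= p j * Z (S j) (S r) + (1 - p j) * Z (S j) r) ->
  forall j r, Z j r <= 0.
Proof.
  intros Hctx HK H0 Hrec.
  destruct Hctx as [Hp [Htl [Hc Hq]]].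
  set (Km := fun r => sumk (fun i => Rabs (K i)) (S r)).
  assert (Km0 : forall r, 0 <= Km r) by (intros; apply sumk_nonneg; intros; apply Rabs_pos).
  assert (KmK : forall r, K r <= Km r).
  { intros r; unfold Km; simpl. pose proof (sumk_nonneg (fun i => Rabs (K i)) r ltac:(intros; apply Rabs_pos)).
    pose proof (Rle_abs (K r)). lra. }
  assert (Kmon : forall r, Km r <= Km (S r)).
  { intros r; unfold Km. change (sumk (fun i => Rabs (K i)) (S (S r))) with
      (sumk (fun i => Rabs (K i)) (S r) + Rabs (K (S r))). pose proof (Rabs_pos (K (S r))). lra. }
  assert (Hclaim : forall N j r, Z j r <= Km r * (1 - SS p N j r)).
  { intros N; induction N as [|N IH]; intros j r.
    - unfold SS, SW; simpl. rewrite Rminus_0_r, Rmult_1_r. eapply Rle_trans; [apply HK|apply KmK].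
    - induction r as [|r IHr] in j |- *.
      + unfold SS at 1. rewrite SW_0. rewrite Rminus_diag, Rmult_0_r. apply H0.
      + eapply Rle_trans; [apply Hrec|]. rewrite SS_rec.
        specialize (IH (S j) (S r)). specialize (IHr (S j)).
        pose proof (SS_bounds p Hp N (S j) (S r)). pose proof (SS_bounds p Hp (S N) (S j) r).
        pose proof (Km0 r). pose proof (Kmon r). specialize (Hp j).
        assert (Km r * (1 - SS p (S N) (S j) r) <= Km (S r) * (1 - SS p (S N) (S j) r)) by nra.
        nra. }
  intros j r. destruct (Rle_lt_dec (Z j r) 0) as [Hle|Hgt]; auto. exfalso.
  set (A := Km r * (INR r + T0)).
  assert (HA : 0 <= A). { unfold A. destruct Htl as [_ HT]. pose proof (HT 0%nat). pose proof (pos_INR r). pose proof (Km0 r). nra. }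
  destruct (archimed_cor1 (Z j r / (A + 1))) as [N [HN1 HN2]].
  { apply Rdiv_lt_0_compat; lra. }
  assert (HNp : 0 < INR N) by (apply lt_0_INR; lia).
  assert (HF := F1_bound p t T0 Hp Htl N j r).
  assert (HM : 0 <= SW p INR N j r).
  { unfold SW; apply sumk_nonneg; intros k. pose proof (pos_INR k). pose proof (Hf_nonneg p r Hp j k). nra. }
  destruct Htl as [_ HT]. specialize (HT j).
  specialize (Hclaim N j r). pose proof (SS_bounds p Hp N j r).
  assert (Hn : INR N * (1 - SS p N j r) <= INR r + T0) by lra.
  assert (Z j r * INR N <= A).
  { unfold A. assert (Km r * (1 - SS p N j r) * INR N <= Km r * (INR r + T0)).
    { rewrite Rmult_assoc. apply Rmult_le_compat_l; [apply Km0|]. lra. }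
    nra. }
  assert (A + 1 < Z j r * INR N).
  { apply Rmult_lt_compat_r with (r := INR N * (A + 1)) in HN1; [|nra].
    replace (/ INR N * (INR N * (A + 1))) with (A + 1) in HN1 by (field; lra).
    replace (Z j r / (A + 1) * (INR N * (A + 1))) with (Z j r * INR N) in HN1 by (field; lra).
    exact HN1. }
  lra.
Qed.

Lemma MP_eq p t T0 c (Z : nat -> nat -> R) (K : nat -> R) : Ctx p t T0 c ->
  (forall j r, Rabs (Z j r) <= K r) -> (forall j, Z j 0%nat = 0) ->
  (forall j r, Z j (S r) = p j * Z (S j) (S r) + (1 - p j) * Z (S j) r) ->
  forall j r, Z j r = 0.
Proof.
  intros Hc HK H0 Hr j r.
  assert (A := MP p t T0 c Z K Hc (fun j r => Rle_trans _ _ _ (Rle_abs _) (HK j r))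
                 (fun j => Req_le _ _ (H0 j)) (fun j r => Req_le _ _ (Hr j r)) j r).
  assert (B : (fun j r => - Z j r) j r <= 0).
  { apply (MP p t T0 c (fun j r => - Z j r) K Hc).
    - intros j0 r0; simpl; specialize (HK j0 r0); rewrite <- Rabs_Ropp in HK. eapply Rle_trans; [apply Rle_abs|apply HK].
    - intros j0; simpl; rewrite H0; lra.
    - intros j0 r0; simpl; rewrite Hr; lra. }
  simpl in B. lra.
Qed.

Lemma Dom_const a : Dom (fun _ => a).
Proof. exists (Rabs a). intros k. pose proof (Rabs_pos a). pose proof (pos_INR k). nra. Qed.

Lemma mass1 p t T0 c : Ctx p t T0 c -> forall j r, Ex p j r (fun _ => 1) = 1.
Proof.
  intros Hc j r.
  assert (E := MP_eq p t T0 c (fun j r => Ex p j r (fun _ => 1) - 1) (fun r => 1 * Bnd T0 c r + 1) Hc).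
  simpl in E. enough (Ex p j r (fun _ => 1) - 1 = 0) by lra. apply E.
  - intros j0 r0. destruct (Ex_bound p t T0 c j0 r0 (fun _ => 1) 1 Hc) as [_ Hb].
    { intros k. rewrite Rabs_R1. pose proof (pos_INR k). nra. }
    unfold Ex. eapply Rle_trans; [apply Rabs_triang|]. rewrite Rabs_Ropp, Rabs_R1. lra.
  - intros j0. rewrite Ex_0. lra.
  - intros j0 r0. rewrite (Ex_rec p t T0 c j0 r0 (fun _ => 1) Hc (Dom_const 1)). lra.
Qed.

Lemma Ex_const p t T0 c j r a : Ctx p t T0 c -> Ex p j r (fun _ => a) = a.
Proof.
  intros Hc. transitivity (Ex p j r (fun _ => a * 1)).
  { unfold Ex; apply Series_ext; intros; lra. }
  rewrite (Ex_scal p j r a (fun _ => 1)), (mass1 p t T0 c Hc j r). lra.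
Qed.

Lemma Ex_ext p j r f g : (forall k, f k = g k) -> Ex p j r f = Ex p j r g.
Proof. intros H; unfold Ex; apply Series_ext; intros k; rewrite H; auto. Qed.

Lemma Ex_lin p t T0 c j r f g a b : Ctx p t T0 c -> Dom f -> Dom g ->
  Ex p j r (fun k => f k + a * g k + b) = Ex p j r f + a * Ex p j r g + b.
Proof.
  intros Hc Hf Hg.
  rewrite (Ex_plus p t T0 c j r (fun k => f k + a * g k) (fun _ => b) Hc).
  2: apply Dom_plus; auto; apply Dom_scal; auto.
  2: apply Dom_const.
  rewrite (Ex_plus p t T0 c j r f (fun k => a * g k) Hc Hf (Dom_scal a g Hg)).
  rewrite Ex_scal, (Ex_const p t T0 c j r b Hc). lra.
Qed.

Definition ww (t : nat -> R) j r k := INR k - INR r - t j + t (j + k + r)%nat.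

Lemma Dom_ww_bound p t T0 c j r : Ctx p t T0 c ->
  forall k, Rabs (ww t j r k) <= (INR r + 2 * T0 + 1) * (1 + INR k ^ 2).
Proof.
  intros [_ [[_ HT] _]] k. unfold ww.
  pose proof (HT j). pose proof (HT (j + k + r)%nat). pose proof (pos_INR k). pose proof (pos_INR r).
  assert (INR k <= 1 + INR k ^ 2) by nra.
  apply Rabs_le. split; nra.
Qed.

Lemma Dom_ww2_bound p t T0 c j r : Ctx p t T0 c ->
  forall k, Rabs (ww t j r k ^ 2) <= (2 + 2 * (INR r + 2 * T0) ^ 2) * (1 + INR k ^ 2).
Proof.
  intros [_ [[_ HT] _]] k. unfold ww.
  pose proof (HT j). pose proof (HT (j + k + r)%nat). pose proof (pos_INR k). pose proof (pos_INR r).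
  rewrite Rabs_right by (apply Rle_ge, pow2_ge_0).
  set (w := INR k - INR r - t j + t (j + k + r)%nat).
  assert (Hw : -(INR k + (INR r + 2 * T0)) <= w <= INR k + (INR r + 2 * T0)) by (unfold w; split; nra).
  assert (w ^ 2 <= (INR k + (INR r + 2 * T0)) ^ 2) by nra.
  set (A := INR r + 2 * T0) in *.
  assert ((INR k + A) ^ 2 <= 2 * INR k ^ 2 + 2 * A ^ 2) by (pose proof (pow2_ge_0 (INR k - A)); nra).
  assert (0 <= A ^ 2 * INR k ^ 2) by (apply Rmult_le_pos; apply pow2_ge_0).
  nra.
Qed.

Lemma Dom_ww p t T0 c j r : Ctx p t T0 c -> Dom (ww t j r).
Proof. intros H; eexists; apply (Dom_ww_bound p t T0 c j r H). Qed.
Lemma Dom_ww2 p t T0 c j r : Ctx p t T0 c -> Dom (fun k => ww t j r k ^ 2).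
Proof. intros H; eexists; apply (Dom_ww2_bound p t T0 c j r H). Qed.

Lemma ww_succ (p t : nat -> R) T0 j r k : tails p t T0 ->
  ww t j (S r) (S k) = ww t (S j) (S r) k + 2 * (1 - p j).
Proof.
  intros [Ht _]. unfold ww. rewrite Ht. rewrite !S_INR.
  replace (j + S k + S r)%nat with (S j + k + S r)%nat by lia. lra.
Qed.
Lemma ww_fail (p t : nat -> R) T0 j r k : tails p t T0 ->
  ww t j (S r) k = ww t (S j) r k - 2 * p j.
Proof.
  intros [Ht _]. unfold ww. rewrite Ht. rewrite !S_INR.
  replace (j + k + S r)%nat with (S j + k + r)%nat by lia. lra.
Qed.

Lemma Eww0 p t T0 c : Ctx p t T0 c -> forall j r, Ex p j r (ww t j r) = 0.
Proof.
  intros Hc.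
  apply (MP_eq p t T0 c (fun j r => Ex p j r (ww t j r)) (fun r => (INR r + 2 * T0 + 1) * Bnd T0 c r) Hc).
  - intros j r. apply (Ex_bound p t T0 c j r _ _ Hc (Dom_ww_bound p t T0 c j r Hc)).
  - intros j. rewrite Ex_0. unfold ww. simpl. replace (j + 0 + 0)%nat with j by lia. lra.
  - intros j r. pose proof Hc as [Hp [Htl _]].
    rewrite (Ex_rec p t T0 c j r _ Hc (Dom_ww p t T0 c j (S r) Hc)).
    rewrite (Ex_ext p (S j) (S r) _ (fun k => ww t (S j) (S r) k + 0 * ww t (S j) (S r) k + 2 * (1 - p j)))
      by (intros k; rewrite (ww_succ p t T0 j r k Htl); lra).
    rewrite (Ex_ext p (S j) r _ (fun k => ww t (S j) r k + 0 * ww t (S j) r k + - (2 * p j)))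
      by (intros k; rewrite (ww_fail p t T0 j r k Htl); lra).
    rewrite !(Ex_lin p t T0 c) by first [exact Hc | apply (Dom_ww p t T0 c); exact Hc].
    lra.
Qed.

Lemma Omega_rec p t T0 c j r : Ctx p t T0 c ->
  Ex p j (S r) (fun k => ww t j (S r) k ^ 2) =
  p j * Ex p (S j) (S r) (fun k => ww t (S j) (S r) k ^ 2) + (1 - p j) * Ex p (S j) r (fun k => ww t (S j) r k ^ 2)
  + 4 * p j * (1 - p j).
Proof.
  intros Hc. pose proof Hc as [Hp [Htl _]].
  rewrite (Ex_rec p t T0 c j r _ Hc (Dom_ww2 p t T0 c j (S r) Hc)).
  rewrite (Ex_ext p (S j) (S r) _ (fun k => ww t (S j) (S r) k ^ 2 + (4 * (1 - p j)) * ww t (S j) (S r) k + 4 * (1 - p j) ^ 2))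
    by (intros k; rewrite (ww_succ p t T0 j r k Htl); ring).
  rewrite (Ex_ext p (S j) r _ (fun k => ww t (S j) r k ^ 2 + (- 4 * p j) * ww t (S j) r k + 4 * p j ^ 2))
    by (intros k; rewrite (ww_fail p t T0 j r k Htl); ring).
  rewrite !(Ex_lin p t T0 c) by first [exact Hc | apply (Dom_ww2 p t T0 c); exact Hc | apply (Dom_ww p t T0 c); exact Hc].
  rewrite !(Eww0 p t T0 c Hc). ring.
Qed.

Lemma Omega_bounds p t T0 c : Ctx p t T0 c -> forall j r,
  2 * INR r - t j <= Ex p j r (fun k => ww t j r k ^ 2) <= 2 * INR r + t j.
Proof.
  intros Hc j r. pose proof Hc as [Hp [[Ht HT] _]]. split.
  - enough (2 * INR r - t j - Ex p j r (fun k => ww t j r k ^ 2) <= 0) by lra.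
    apply (MP p t T0 c (fun j r => 2 * INR r - t j - Ex p j r (fun k => ww t j r k ^ 2))
             (fun r => 2 * INR r + (2 + 2 * (INR r + 2 * T0) ^ 2) * Bnd T0 c r) Hc).
    + intros j0 r0. destruct (Ex_bound p t T0 c j0 r0 _ _ Hc (Dom_ww2_bound p t T0 c j0 r0 Hc)) as [_ Hb].
      unfold Ex in *. pose proof (HT j0). apply Rabs_le_between in Hb. lra.
    + intros j0. rewrite Ex_0. unfold ww. simpl. replace (j0 + 0 + 0)%nat with j0 by lia.
      pose proof (HT j0). lra.
    + intros j0 r0. rewrite (Omega_rec p t T0 c j0 r0 Hc). rewrite Ht. rewrite S_INR.
      specialize (Hp j0). nra.
  - enough (Ex p j r (fun k => ww t j r k ^ 2) - 2 * INR r - t j <= 0) by lra.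
    apply (MP p t T0 c (fun j r => Ex p j r (fun k => ww t j r k ^ 2) - 2 * INR r - t j)
             (fun r => (2 + 2 * (INR r + 2 * T0) ^ 2) * Bnd T0 c r) Hc).
    + intros j0 r0. destruct (Ex_bound p t T0 c j0 r0 _ _ Hc (Dom_ww2_bound p t T0 c j0 r0 Hc)) as [_ Hb].
      unfold Ex in *. pose proof (HT j0). pose proof (pos_INR r0). apply Rabs_le_between in Hb. lra.
    + intros j0. rewrite Ex_0. unfold ww. simpl. replace (j0 + 0 + 0)%nat with j0 by lia.
      pose proof (HT j0). lra.
    + intros j0 r0. rewrite (Omega_rec p t T0 c j0 r0 Hc). rewrite Ht. rewrite S_INR.
      specialize (Hp j0). nra.
Qed.


Lemma t_decr p t T0 : env p -> tails p t T0 -> forall j n, t (j + n)%nat <= t j.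
Proof.
  intros Hp [Ht _] j n; induction n.
  - rewrite Nat.add_0_r; lra.
  - replace (j + S n)%nat with (S (j + n)) by lia. rewrite Ht. specialize (Hp (j + n)%nat). lra.
Qed.

Lemma Dom_INR : Dom INR.
Proof. exists 1. intros k. rewrite Rabs_right by (apply Rle_ge, pos_INR). pose proof (pos_INR k). nra. Qed.

Lemma Dom_tt (t : nat -> R) T0 j r : (forall j, 0 <= t j <= T0) -> Dom (fun k => t (j + k + r)%nat).
Proof.
  intros HT. exists T0. intros k. specialize (HT (j + k + r)%nat).
  rewrite Rabs_right by lra. pose proof (pow2_ge_0 (INR k)). nra.
Qed.

Lemma rho_bounds p t T0 c j r : Ctx p t T0 c ->
  INR r + t j - t (j + r)%nat <= Ex p j r INR <= INR r + t j.
Proof.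
  intros Hc. pose proof Hc as [Hp [Htl _]]. pose proof Htl as [Ht HT].
  pose proof (Eww0 p t T0 c Hc j r) as E.
  rewrite (Ex_ext p j r _ (fun k => INR k + 1 * t (j + k + r)%nat + (- INR r - t j))) in E
    by (intros; unfold ww; lra).
  rewrite (Ex_lin p t T0 c) in E; [| exact Hc | apply Dom_INR | apply (Dom_tt t T0); exact HT].
  assert (L1 : Ex p j r (fun k => t (j + k + r)%nat) <= Ex p j r (fun _ => t (j + r)%nat)).
  { apply (Ex_le p t T0 c); auto. apply (Dom_tt t T0); exact HT. apply Dom_const.
    intros k. replace (j + k + r)%nat with ((j + r) + k)%nat by lia. apply (t_decr p t T0 Hp Htl). }
  assert (L2 : Ex p j r (fun _ => 0) <= Ex p j r (fun k => t (j + k + r)%nat)).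
  { apply (Ex_le p t T0 c); auto. apply Dom_const. apply (Dom_tt t T0); exact HT.
    intros k. apply HT. }
  rewrite !(Ex_const p t T0 c) in L1, L2 by exact Hc. lra.
Qed.

Lemma B_bounds p t T0 c j r eps : Ctx p t T0 c -> 0 < eps < 1 ->
  (1 - eps) * (2 * INR r - t j) - t j ^ 2 / eps <= Ex p j r (fun k => (INR k - INR r) ^ 2)
  <= (1 + eps) * (2 * INR r + t j) + (1 + / eps) * t j ^ 2.
Proof.
  intros Hc He. pose proof Hc as [Hp [Htl _]]. pose proof Htl as [Ht HT].
  pose proof (Omega_bounds p t T0 c Hc j r) as Om.
  assert (HD : forall k, 0 <= t j - t (j + k + r)%nat <= t j).
  { intros k. split. pose proof (t_decr p t T0 Hp Htl j (k + r)). rewrite Nat.add_assoc in H. lra.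
    pose proof (HT (j + k + r)%nat). lra. }
  assert (Hdec : forall k, INR k - INR r = ww t j r k + (t j - t (j + k + r)%nat)) by (intros; unfold ww; lra).
  assert (DB : Dom (fun k => (INR k - INR r) ^ 2)).
  { destruct (Dom_ww2 p t T0 c j r Hc) as [C HC]. exists (2 * C + 2 * T0 ^ 2). intros k.
    rewrite Hdec. specialize (HC k). specialize (HD k). pose proof (HT j).
    rewrite Rabs_right in HC |- * by (apply Rle_ge, pow2_ge_0).
    set (w := ww t j r k) in *. set (d := t j - t (j + k + r)%nat) in *.
    assert ((w + d) ^ 2 <= 2 * w ^ 2 + 2 * d ^ 2) by (pose proof (pow2_ge_0 (w - d)); nra).
    assert (d ^ 2 <= T0 ^ 2) by nra. pose proof (pow2_ge_0 (INR k)). nra. }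
  pose proof (pow2_ge_0 (t j)). pose proof (HT j).
  split.
  - set (a := 1 - eps). set (b := - (t j ^ 2 / eps)).
    assert (L : Ex p j r (fun k => 0 + a * ww t j r k ^ 2 + b) <= Ex p j r (fun k => (INR k - INR r) ^ 2)).
    { apply (Ex_le p t T0 c); auto.
      - apply Dom_plus; [apply Dom_plus; [apply Dom_const | apply Dom_scal; apply (Dom_ww2 p t T0 c); auto] | apply Dom_const].
      - intros k. rewrite Hdec. specialize (HD k). unfold a, b.
        set (w := ww t j r k). set (d := t j - t (j + k + r)%nat).
        assert (Hsq : 0 <= (eps * w + d) ^ 2 / eps).
        { unfold Rdiv; apply Rmult_le_pos; [apply pow2_ge_0 | left; apply Rinv_0_lt_compat; lra]. }
        replace ((eps * w + d) ^ 2 / eps) with (eps * w ^ 2 + 2 * w * d + d ^ 2 / eps) in Hsq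
          by (field; lra).
        assert (Hdt : d ^ 2 <= t j ^ 2) by (apply pow_incr; exact HD).
        assert (d ^ 2 / eps <= t j ^ 2 / eps) by (apply Rmult_le_compat_r; [left; apply Rinv_0_lt_compat; lra| exact Hdt]).
        assert (0 <= d ^ 2) by apply pow2_ge_0.
        assert (d ^ 2 <= d ^ 2 / eps).
        { replace (d ^ 2 / eps) with (d ^ 2 * / eps) by reflexivity.
          assert (1 <= / eps) by (rewrite <- Rinv_1; apply Rinv_le_contravar; lra). nra. }
        nra. }
    rewrite (Ex_lin p t T0 c) in L; [| exact Hc | apply Dom_const | apply (Dom_ww2 p t T0 c); exact Hc].
    rewrite (Ex_const p t T0 c) in L by exact Hc. unfold a, b in *.
    assert ((1 - eps) * (2 * INR r - t j) <= (1 - eps) * Ex p j r (fun k => ww t j r k ^ 2)) by (apply Rmult_le_compat_l; lra).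
    lra.
  - set (a := 1 + eps). set (b := (1 + / eps) * t j ^ 2).
    assert (L : Ex p j r (fun k => (INR k - INR r) ^ 2) <= Ex p j r (fun k => 0 + a * ww t j r k ^ 2 + b)).
    { apply (Ex_le p t T0 c); auto.
      - apply Dom_plus; [apply Dom_plus; [apply Dom_const | apply Dom_scal; apply (Dom_ww2 p t T0 c); auto] | apply Dom_const].
      - intros k. rewrite Hdec. specialize (HD k). unfold a, b.
        set (w := ww t j r k). set (d := t j - t (j + k + r)%nat).
        assert (Hsq : 0 <= (eps * w - d) ^ 2 / eps).
        { unfold Rdiv; apply Rmult_le_pos; [apply pow2_ge_0 | left; apply Rinv_0_lt_compat; lra]. }
        replace ((eps * w - d) ^ 2 / eps) with (eps * w ^ 2 - 2 * w * d + d ^ 2 / eps) in Hsq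
          by (field; lra).
        assert (d ^ 2 <= t j ^ 2) by (apply pow_incr; exact HD).
        assert (d ^ 2 / eps <= / eps * t j ^ 2).
        { replace (d ^ 2 / eps) with (/ eps * d ^ 2) by (unfold Rdiv; ring).
          apply Rmult_le_compat_l; [left; apply Rinv_0_lt_compat; lra| lra]. }
        nra. }
    rewrite (Ex_lin p t T0 c) in L; [| exact Hc | apply Dom_const | apply (Dom_ww2 p t T0 c); exact Hc].
    rewrite (Ex_const p t T0 c) in L by exact Hc. unfold a, b in *.
    assert ((1 + eps) * Ex p j r (fun k => ww t j r k ^ 2) <= (1 + eps) * (2 * INR r + t j)) by (apply Rmult_le_compat_l; lra).
    lra.
Qed.


Lemma large_nat (M : R) : exists N, forall x, (N <= x)%nat -> M < INR x.
Proof.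
  destruct (archimed_cor1 (/ (Rabs M + 1))) as [N [H1 H2]].
  { apply Rinv_0_lt_compat. pose proof (Rabs_pos M). lra. }
  exists N. intros x Hx. apply le_INR in Hx.
  assert (HN : 0 < INR N) by (apply lt_0_INR; lia).
  assert (Rabs M + 1 < INR N).
  { pose proof (Rabs_pos M).
    apply Rinv_lt_cancel; [lra|]. exact H1. }
  pose proof (Rle_abs M). lra.
Qed.

Lemma large_sqrt (M : R) : exists N, forall x, (N <= x)%nat -> M < sqrt (INR x).
Proof.
  destruct (large_nat (M ^ 2)) as [N HN]. exists N. intros x Hx. specialize (HN x Hx).
  destruct (Rlt_le_dec M (sqrt (INR x))) as [H|H]; auto. exfalso.
  pose proof (sqrt_pos (INR x)). pose proof (sqrt_sqrt (INR x) (pos_INR x)). nra.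
Qed.

Lemma ev_max (P Q : nat -> Prop) : (exists N, forall x, (N <= x)%nat -> P x) ->
  (exists N, forall x, (N <= x)%nat -> Q x) -> exists N, forall x, (N <= x)%nat -> P x /\ Q x.
Proof.
  intros [N1 H1] [N2 H2]. exists (max N1 N2). intros x Hx. split; [apply H1|apply H2]; lia.
Qed.

Lemma ln_ge1 x : 3 <= x -> 1 <= ln x.
Proof.
  intros Hx. pose proof exp_le_3. destruct (Req_dec (exp 1) x) as [E|E].
  - rewrite <- E, ln_exp. lra.
  - rewrite <- (ln_exp 1) at 1. left. apply ln_increasing. apply exp_pos. lra.
Qed.

Lemma analytic (delta C1 : R) (rho B tt : nat -> R) :
  0 <= delta -> 0 <= C1 ->
  (forall x, (1 <= x)%nat -> delta - tt x <= rho x <= delta) ->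
  (forall x, (1 <= x)%nat -> 0 <= tt x <= delta) ->
  (forall x, (2 <= x)%nat -> Rabs (B x - 2 * INR x) <= C1 * sqrt (INR x)) ->
  is_lim_seq tt 0 ->
  is_lim_seq (fun x => (INR x + rho x) / INR x) 1 /\
  is_lim_seq (fun x => 2 * rho x / (B x / INR x)) delta /\
  (exists C : R, exists N : nat, forall x : nat, (N <= x)%nat ->
     2 * rho x / (B x / INR x) <= delta + C * (ln (INR x)) ^ 4 / sqrt (INR x)).
Proof.
  intros Hd HC1 Hrho Htt HB Hlim.
  assert (Key : forall x, (2 <= x)%nat -> C1 < sqrt (INR x) ->
     let s := sqrt (INR x) in
     0 < s /\ s * s = INR x /\ INR x < B x /\
     (2 * rho x / (B x / INR x)) * B x = 2 * INR x * rho x).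
  { intros x Hx Hs s.
    assert (Hx0 : 0 < INR x) by (apply lt_0_INR; lia).
    assert (Hs0 : 0 < s) by (apply sqrt_lt_R0; exact Hx0).
    assert (Hss : s * s = INR x) by (apply sqrt_sqrt; lra).
    specialize (HB x Hx). apply Rabs_le_between in HB.
    assert (C1 * s < s * s) by (apply Rmult_lt_compat_r; auto).
    assert (INR x < B x) by (fold s in HB; lra).
    repeat split; auto. field. split; lra. }
  split; [|split].
  - apply is_lim_seq_spec. intros eps.
    destruct (ev_max (fun x => (1 <= x)%nat) (fun x => delta / eps < INR x)) as [N HN].
    { exists 1%nat; auto. } { apply large_nat. }
    exists N. intros x Hx. destruct (HN x Hx) as [H1 H2].
    assert (Hx0 : 0 < INR x) by (apply lt_0_INR; lia).
    specialize (Hrho x H1). specialize (Htt x H1).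
    replace ((INR x + rho x) / INR x - 1) with (rho x / INR x) by (field; lra).
    pose proof (cond_pos eps).
    rewrite Rabs_right by (apply Rle_ge; unfold Rdiv; apply Rmult_le_pos; [lra|left; apply Rinv_0_lt_compat; lra]).
    apply Rmult_lt_reg_r with (INR x); auto.
    unfold Rdiv. rewrite Rmult_assoc, Rinv_l by lra.
    assert (delta < eps * INR x).
    { apply Rmult_lt_compat_l with (r := eps) in H2; [|lra].
      replace (eps * (delta / eps)) with delta in H2 by (field; lra). exact H2. }
    lra.
  - apply is_lim_seq_spec. intros eps. pose proof (cond_pos eps) as Heps.
    apply is_lim_seq_spec in Hlim. destruct (Hlim (mkposreal (eps / 4) ltac:(lra))) as [N1 HN1].
    destruct (ev_max (fun x => (2 <= x)%nat /\ (N1 <= x)%nat) (fun x => C1 + 2 * delta * C1 / eps < sqrt (INR x))) as [N HN].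
    { exists (max 2 N1). intros; split; lia. } { apply large_sqrt. }
    exists N. intros x Hx. destruct (HN x Hx) as [[H2 HN1x] Hs].
    assert (Hd1 : 0 <= 2 * delta * C1 / eps).
    { unfold Rdiv. apply Rmult_le_pos; [nra|left; apply Rinv_0_lt_compat; lra]. }
    destruct (Key x H2 ltac:(lra)) as [Hs0 [Hss [HBx Hth]]].
    set (s := sqrt (INR x)) in *. set (th := 2 * rho x / (B x / INR x)) in *.
    specialize (HN1 x HN1x). simpl in HN1. rewrite Rminus_0_r in HN1.
    specialize (Hrho x ltac:(lia)). specialize (Htt x ltac:(lia)).
    specialize (HB x H2). fold s in HB. pose proof (pos_INR x).
    assert (HBa : Rabs (th - delta) * B x = Rabs (2 * INR x * (rho x - delta) + delta * (2 * INR x - B x))).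
    { rewrite <- (Rabs_right (B x)) at 1 by lra. rewrite <- Rabs_mult. f_equal.
      replace ((th - delta) * B x) with (th * B x - delta * B x) by ring. rewrite Hth. ring. }
    assert (Hup : Rabs (2 * INR x * (rho x - delta) + delta * (2 * INR x - B x)) <= 2 * INR x * tt x + delta * (C1 * s)).
    { eapply Rle_trans; [apply Rabs_triang|]. rewrite !Rabs_mult.
      rewrite (Rabs_right 2) by lra. rewrite (Rabs_right (INR x)) by (apply Rle_ge, pos_INR).
      rewrite (Rabs_right delta) by lra. rewrite Rabs_minus_sym in HB |- *.
      rewrite (Rabs_right (delta - rho x)) by lra.
      assert (delta * Rabs (2 * INR x - B x) <= delta * (C1 * s)) by (apply Rmult_le_compat_l; auto).
      pose proof (pos_INR x). nra. }
    assert (Hs2 : 2 * delta * C1 / eps < s) by lra.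
    assert (Hs3 : 2 * delta * C1 < eps * s).
    { apply Rmult_lt_compat_l with (r := eps) in Hs2; [|lra].
      replace (eps * (2 * delta * C1 / eps)) with (2 * delta * C1) in Hs2 by (field; lra). exact Hs2. }
    assert (2 * INR x * tt x + delta * (C1 * s) < eps * INR x).
    { rewrite <- Hss. assert (tt x < eps / 4) by (rewrite Rabs_right in HN1 by lra; lra). nra. }
    assert (Rabs (th - delta) * B x < eps * B x) by nra.
    apply Rmult_lt_reg_r with (B x); lra.
  - exists (delta * C1).
    destruct (ev_max (fun x => (3 <= x)%nat) (fun x => C1 + 1 < sqrt (INR x))) as [N HN].
    { exists 3%nat; auto. } { apply large_sqrt. }
    exists N. intros x Hx. destruct (HN x Hx) as [H3 Hs].
    destruct (Key x ltac:(lia) ltac:(lra)) as [Hs0 [Hss [HBx Hth]]].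
    set (s := sqrt (INR x)) in *. set (th := 2 * rho x / (B x / INR x)) in *.
    specialize (Hrho x ltac:(lia)). specialize (HB x ltac:(lia)). fold s in HB.
    apply Rabs_le_between in HB.
    assert (HL : 1 <= ln (INR x) ^ 4).
    { apply pow_R1_Rle. apply ln_ge1. apply le_INR in H3. simpl in H3. lra. }
    assert (Hm : (th - delta) * B x <= delta * (C1 * s)).
    { replace ((th - delta) * B x) with (th * B x - delta * B x) by ring. rewrite Hth.
      pose proof (pos_INR x). nra. }
    assert (Hfin : th - delta <= delta * C1 / s).
    { destruct (Rle_lt_dec (th - delta) 0) as [Hn|Hp].
      - unfold Rdiv. apply Rle_trans with 0; auto. apply Rmult_le_pos; [nra|left; apply Rinv_0_lt_compat; lra].
      - assert ((th - delta) * (s * s) <= delta * (C1 * s)) by (rewrite Hss; nra).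
        apply Rmult_le_reg_r with s; auto. unfold Rdiv. rewrite Rmult_assoc, Rinv_l by lra. nra. }
    assert (delta * C1 / s <= delta * C1 * ln (INR x) ^ 4 / s).
    { unfold Rdiv. apply Rmult_le_compat_r; [left; apply Rinv_0_lt_compat; lra|].
      assert (0 <= delta * C1) by nra. nra. }
    lra.
Qed.


Fixpoint cmin (p : nat -> R) (n : nat) : R :=
  match n with O => 1 - p O | S m => Rmin (cmin p m) (1 - p (S m)) end.

Lemma cmin_pos p : env p -> forall n, 0 < cmin p n.
Proof.
  intros Hp n; induction n; simpl. specialize (Hp 0%nat); lra.
  apply Rmin_glb_lt; auto. specialize (Hp (S n)); lra.
Qed.

Lemma cmin_le p : forall n i, (i <= n)%nat -> cmin p n <= 1 - p i.
Proof.
  induction n; intros i Hi.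
  - assert (i = 0%nat) by lia. subst. simpl. lra.
  - simpl. destruct (Nat.eq_dec i (S n)) as [->|Hne].
    + apply Rmin_r.
    + eapply Rle_trans; [apply Rmin_l|]. apply IHn; lia.
Qed.

Lemma sumk_shift (e : nat -> R) m : sumk (fun i => e (S i)) m = sumk e (S m) - e 0%nat.
Proof. induction m; simpl in *; lra. Qed.

Lemma Dom_sqshift (x : R) : Dom (fun k => (INR k - x) ^ 2).
Proof.
  exists (2 + 2 * x ^ 2). intros k. rewrite Rabs_right by (apply Rle_ge, pow2_ge_0).
  assert ((INR k - x) ^ 2 <= 2 * INR k ^ 2 + 2 * x ^ 2) by (pose proof (pow2_ge_0 (INR k + x)); nra).
  assert (0 <= x ^ 2 * INR k ^ 2) by (apply Rmult_le_pos; apply pow2_ge_0).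
  nra.
Qed.

Theorem corollary4p3 (p : nat -> R) (delta : R) :
  (forall i : nat, 1 / 2 <= p i < 1) ->
  is_series (fun i : nat => 2 * p (S i) - 1) delta ->
  (forall x : nat, (1 <= x)%nat ->
     ex_series (fun k : nat => INR k * U_pmf p x k) /\
     ex_series (fun k : nat => (INR k - INR x) ^ 2 * U_pmf p x k)) /\
  is_lim_seq (fun x : nat => EU p x / INR x) 1 /\
  is_lim_seq (fun x : nat => theta p x) delta /\
  (exists C : R, exists N : nat, forall x : nat, (N <= x)%nat ->
     theta p x <= delta + C * (ln (INR x)) ^ 4 / sqrt (INR x)).
Proof.
  intros Hp0 Hs.
  assert (Hp : env p) by exact Hp0.
  set (e := fun i => 2 * p i - 1).
  assert (He : forall i, 0 <= e i <= 1) by (intros i; unfold e; specialize (Hp i); lra).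
  set (t := fun j => delta + e 0%nat - sumk e j).
  assert (Hsl := series_lim _ _ Hs).
  assert (Hpart : forall n, sum_n (fun i => 2 * p (S i) - 1) n = sumk e (S (S n)) - e 0%nat).
  { intros n. rewrite sum_n_sumk. apply (sumk_shift e (S n)). }
  assert (Hle : forall n, sum_n (fun i => 2 * p (S i) - 1) n <= delta).
  { intros n.
    assert (Hev : eventually (fun m => (fun _ => sum_n (fun i => 2 * p (S i) - 1) n) m <= sum_n (fun i => 2 * p (S i) - 1) m)).
    { exists n. intros m Hm. simpl. rewrite !Hpart.
      assert (sumk e (S (S n)) <= sumk e (S (S m))) by (apply (sumk_mono e); [intros; apply He| lia]). lra. }
    assert (H := is_lim_seq_le_loc _ _ _ _ Hev (is_lim_seq_const _) Hsl).
    simpl in H. exact H. }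
  assert (Hd0 : 0 <= delta).
  { specialize (Hle 0%nat). rewrite sum_O in Hle. specialize (Hp 1%nat). lra. }
  assert (Ht1 : t 1%nat = delta) by (unfold t; simpl; lra).
  assert (Htl : tails p t (delta + 1)).
  { split.
    - intros j. unfold t, e. simpl. lra.
    - intros j. split.
      + destruct j as [|[|n]].
        * unfold t; simpl. specialize (He 0%nat). lra.
        * lra.
        * unfold t. specialize (Hle n). rewrite Hpart in Hle. lra.
      + unfold t. pose proof (sumk_nonneg e j (fun i => proj1 (He i))). specialize (He 0%nat). lra. }
  assert (Hc : exists c, 0 < c /\ forall i, c <= 1 - p i).
  { assert (H0 := ex_series_lim_0 _ (ex_intro _ delta Hs)).
    apply is_lim_seq_spec in H0. destruct (H0 (mkposreal (1/2) ltac:(lra))) as [N HN].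
    exists (Rmin (1/4) (cmin p (S N))). split.
    - apply Rmin_glb_lt; [lra| apply cmin_pos; auto].
    - intros i. destruct (Nat.le_gt_cases i (S N)) as [Hi|Hi].
      + eapply Rle_trans; [apply Rmin_r| apply cmin_le; auto].
      + eapply Rle_trans; [apply Rmin_l|]. destruct i as [|n]; [lia|].
        specialize (HN n ltac:(lia)). simpl in HN. rewrite Rminus_0_r in HN.
        destruct (Rabs_def2 _ _ HN). lra. }
  destruct Hc as [c [Hc0 Hcq]].
  assert (Hctx : Ctx p t (delta + 1) c) by exact (conj Hp (conj Htl (conj Hc0 Hcq))).
  assert (Hpmf : forall x k, (1 <= x)%nat -> U_pmf p x k = Hf p x 1 k) by (intros; apply U_pmf_Hf; auto).
  assert (HEU : forall x, (1 <= x)%nat -> EU p x = Ex p 1 x INR).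
  { intros x Hx. unfold EU, Ex. apply Series_ext. intros k. rewrite Hpmf; auto. }
  assert (HEU2 : forall x, (1 <= x)%nat -> EU2 p x = Ex p 1 x (fun k => (INR k - INR x) ^ 2)).
  { intros x Hx. unfold EU2, Ex. apply Series_ext. intros k. rewrite Hpmf; auto. }
  set (C1 := 2 + 2 * delta + 2 * delta ^ 2).
  assert (HA := analytic delta C1 (rho p) (EU2 p) (fun x => t (1 + x)%nat) Hd0
                  ltac:(unfold C1; nra)).
  destruct HA as [A1 [A2 A3]].
  - intros x Hx. unfold rho. rewrite HEU by auto.
    pose proof (rho_bounds p t (delta + 1) c 1 x Hctx). rewrite Ht1 in H. lra.
  - intros x Hx. split; [apply (proj2 Htl)|]. rewrite <- Ht1. apply (t_decr p t (delta + 1) Hp Htl).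
  - intros x Hx. rewrite HEU2 by lia.
    assert (Hx0 : 0 < INR x) by (apply lt_0_INR; lia).
    set (s := sqrt (INR x)).
    assert (Hss : s * s = INR x) by (apply sqrt_sqrt; lra).
    assert (Hs1 : 1 < s).
    { unfold s. rewrite <- sqrt_1. apply sqrt_lt_1_alt. split; [lra|].
      apply lt_1_INR. lia. }
    assert (Heps : 0 < / s < 1).
    { split. apply Rinv_0_lt_compat; lra. rewrite <- Rinv_1. apply Rinv_lt_contravar; lra. }
    destruct (B_bounds p t (delta + 1) c 1 x (/ s) Hctx Heps) as [L U].
    rewrite Ht1 in L, U.
    replace (delta ^ 2 / / s) with (delta ^ 2 * s) in L by (field; lra).
    rewrite Rinv_inv in U.
    apply Rabs_le_between. rewrite <- Hss in *.
    assert (Hu : / s * s = 1) by (field; lra).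
    assert (Hu0 : 0 < / s) by lra.
    set (u := / s) in *. unfold C1.
    assert (delta * u <= delta) by nra.
    assert (0 <= delta * u) by nra.
    assert (delta <= delta * s) by nra.
    assert (delta ^ 2 <= delta ^ 2 * s) by (pose proof (pow2_ge_0 delta); nra).
    split; nra.
  - apply is_lim_seq_spec. intros eps. apply is_lim_seq_spec in Hsl. destruct (Hsl eps) as [N HN].
    exists (S N). intros x Hx. destruct x as [|n]; [lia|].
    specialize (HN n ltac:(lia)). simpl. unfold t. rewrite Rminus_0_r.
    replace (delta + e 0%nat - sumk e (S (S n))) with (- (sum_n (fun i => 2 * p (S i) - 1) n - delta))
      by (rewrite Hpart; ring).
    rewrite Rabs_Ropp. exact HN.
  - split; [|split; [|split]].
    + intros x Hx. split.
      * apply (ex_series_ext (fun k => INR k * Hf p x 1 k)). intros k; rewrite Hpmf; auto.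
        apply (Dom_ex p t (delta + 1) c 1 x INR Hctx Dom_INR).
      * apply (ex_series_ext (fun k => (INR k - INR x) ^ 2 * Hf p x 1 k)). intros k; rewrite Hpmf; auto.
        apply (Dom_ex p t (delta + 1) c 1 x _ Hctx (Dom_sqshift (INR x))).
    + apply (is_lim_seq_ext (fun x => (INR x + rho p x) / INR x)); [intros x; unfold rho; f_equal; ring | exact A1].
    + exact A2.
    + exact A3.
Qed.
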